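(* Let $t$ be an indeterminate, let $\mathbf K$ be an infinite subset of $\mathbb C\setminus\{0,1\}$, and let $\mathbb F$ be a subring of $\mathbb C(t)$ with $$\mathbb C[t,t^{-1}]\subseteq \mathbb F\subseteq\{f/g : f,g\in\mathbb C[t],\ g(1)\neq 0,\ g(\lambda)\neq0\ \forall \lambda\in\mathbf K\}.$$ Let $A$ be the $\mathbb F$-algebra generated by $x_1,\dots,x_n$ subject to finitely many relations, each an $\mathbb F$-linear combination of monomials in the $x_j$. Assume $t-1$ is a nonzero, nonunit, non-zero-divisor of $A$ and that $A_1:=A/(t-1)A$ is commutative; let $\gamma_1:A\to A_1$ be the canonical map, and regard $A_1$ as a Poisson algebra with bracket $\{\gamma_1(a),\gamma_1(b)\}=\gamma_1((t-1)^{-1}(ab-ba))$. For $\lambda\in\mathbf K$ let $A_\lambda$ be the $\mathbb C$-algebra generated by $x_1,\dots,x_n$ subject to the same relations with all coefficients evaluated at $t=\lambda$, and let $\gamma_\lambda:A\to A_\lambda$ be the $\mathbb C$-algebra map with $t\mapsto\lambda$, $x_j\mapsto x_j$. Let $\widehat A=\prod_{\lambda\in\mathbf K}A_\lambda$ and $\gamma:A\to\widehat A$, $\gamma(a)=(\gamma_\lambda(a))_{\lambda}$. Assume there is an $\mathbb F$-basis $\{\xi_i\}$ of $A$ whose images under $\gamma_1$ and under each $\gamma_\lambda$ ($\lambda\in\mathbf K$) are $\mathbb C$-bases of $A_1$ and $A_\lambda$ respectively. Then $\gamma$ is injective, and with $\Gamma=\gamma_1\gamma^{-1}:\gamma(A)\to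 A_1$, for every ideal $I$ of $\widehat A$ the set $\Gamma(I\cap\gamma(A))$ is a Poisson ideal of $A_1$.
   Context: A Poisson algebra is a commutative $\mathbb C$-algebra with a Lie bracket $\{-,-\}$ satisfying $\{ab,c\}=a\{b,c\}+\{a,c\}b$. An ideal $J$ of a Poisson algebra is a Poisson ideal if $\{J,A_1\}\subseteq J$. The injectivity of $\gamma$ (needed to define $\Gamma$) is established in the paper separately. *)

(* Defs.v *)
From HB Require Import structures.
From mathcomp Require Import all_boot all_order all_algebra.
From mathcomp Require Import complex Rstruct fraction.
From Stdlib Require Import ClassicalEpsilon.

Set Implicit Arguments. Unset Strict Implicit. Unset Printing Implicit Defensive.
Import Order.TTheory GRing.Theory Num.Theory.
Local Open Scope ring_scope.

Definition CC : numClosedFieldType := complex Rdefinitions.R.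

Definition Ct := {fraction {poly CC}}.
Definition toCt (p : {poly CC}) : Ct := @FracField.tofrac _ p.
Definition tt_ : Ct := toCt 'X.

(* Value of a rational function at l: p(l)/q(l) for any representation
   f = p/q with q(l) != 0 (this value does not depend on the representation);
   0 (junk) if no such representation exists. *)
Definition fev (l : CC) (f : Ct) : CC :=
  epsilon (inhabits 0) (fun c : CC => exists p q : {poly CC},
      f = toCt p / toCt q /\ q.[l] != 0 /\ c = p.[l] / q.[l]).

Inductive term (R : Type) (n : nat) : Type :=
| tVar of 'I_n
| tCst of R
| tAdd of term R n & term R n
| tMul of term R n & term R n
| tOpp of term R n.
Arguments tVar {R n}. Arguments tCst {R n}.
Arguments tAdd {R n}. Arguments tMul {R n}. Arguments tOpp {R n}.

Fixpoint tmap (R S : Type) (n : nat) (f : R -> S) (x : term R n) : term S n :=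
  match x with
  | tVar i => tVar i
  | tCst c => tCst (f c)
  | tAdd a b => tAdd (tmap f a) (tmap f b)
  | tMul a b => tMul (tmap f a) (tmap f b)
  | tOpp a => tOpp (tmap f a)
  end.

Fixpoint wf (R : Type) (n : nat) (P : R -> Prop) (x : term R n) : Prop :=
  match x with
  | tVar _ => True
  | tCst c => P c
  | tAdd a b => wf P a /\ wf P b
  | tMul a b => wf P a /\ wf P b
  | tOpp a => wf P a
  end.

Definition monom (R : comNzRingType) (n : nat) (w : seq 'I_n) : term R n :=
  foldr (fun i acc => tMul (tVar i) acc) (tCst 1) w.

(* A relation is a linear combination  sum_j c_j * (monomial w_j),
   given as the list of pairs (c_j, w_j). *)
Definition lincomb (R : comNzRingType) (n : nat) (r : seq (R * seq 'I_n)) : term R n :=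
  foldr (fun cw acc => tAdd (tMul (tCst cw.1) (@monom R n cw.2)) acc) (tCst 0) r.

(* Congruence defining the algebra over the commutative ring (sub)set P of R
   generated by x_0..x_{n-1} subject to the relations rels:
   two expressions are equal in the presented algebra iff related by [cong]. *)
Inductive cong (R : comNzRingType) (n : nat) (P : R -> Prop)
    (rels : seq (seq (R * seq 'I_n))) : term R n -> term R n -> Prop :=
| c_refl x : cong P rels x x
| c_sym x y : cong P rels x y -> cong P rels y x
| c_trans x y z : cong P rels x y -> cong P rels y z -> cong P rels x z
| c_add x x' y y' : cong P rels x x' -> cong P rels y y' ->
    cong P rels (tAdd x y) (tAdd x' y')
| c_mul x x' y y' : cong P rels x x' -> cong P rels y y' ->
    cong P rels (tMul x y) (tMul x' y')
| c_opp x x' : cong P rels x x' -> cong P rels (tOpp x) (tOpp x')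
| c_addA x y z : cong P rels (tAdd x (tAdd y z)) (tAdd (tAdd x y) z)
| c_addC x y : cong P rels (tAdd x y) (tAdd y x)
| c_add0 x : cong P rels (tAdd x (tCst 0)) x
| c_addN x : cong P rels (tAdd x (tOpp x)) (tCst 0)
| c_mulA x y z : cong P rels (tMul x (tMul y z)) (tMul (tMul x y) z)
| c_mul1l x : cong P rels (tMul (tCst 1) x) x
| c_mul1r x : cong P rels (tMul x (tCst 1)) x
| c_mulDl x y z : cong P rels (tMul (tAdd x y) z) (tAdd (tMul x z) (tMul y z))
| c_mulDr x y z : cong P rels (tMul x (tAdd y z)) (tAdd (tMul x y) (tMul x z))
| c_cstD a b : P a -> P b -> cong P rels (tCst (a + b)) (tAdd (tCst a) (tCst b))
| c_cstM a b : P a -> P b -> cong P rels (tCst (a * b)) (tMul (tCst a) (tCst b))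
| c_cstC a x : P a -> cong P rels (tMul (tCst a) x) (tMul x (tCst a))
| c_rel r : List.In r rels -> cong P rels (lincomb r) (tCst 0).

Definition tSub (R : Type) (n : nat) (x y : term R n) := tAdd x (tOpp y).

Definition tsum (R : comNzRingType) (n : nat) (I : Type) (s : seq I)
    (c : I -> R) (e : I -> term R n) : term R n :=
  foldr (fun i acc => tAdd (tMul (tCst (c i)) (e i)) acc) (tCst 0) s.

(* e is a basis over the scalars {c | S c} of the algebra whose elements are
   the expressions satisfying [dom] and whose equality is [eqv]. *)
Definition is_basis (R : comNzRingType) (n : nat) (I : eqType)
    (S : R -> Prop) (dom : term R n -> Prop) (eqv : term R n -> term R n -> Prop)
    (e : I -> term R n) : Prop :=
  (forall a, dom a -> exists (s : seq I) (c : I -> R),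
       uniq s /\ (forall i, S (c i)) /\ eqv a (tsum s c e)) /\
  (forall (s : seq I) (c : I -> R), uniq s -> (forall i, S (c i)) ->
       eqv (tsum s c e) (tCst 0) -> forall i, i \in s -> c i = 0).

Definition subring_of_Ct (F : Ct -> Prop) : Prop :=
  F 1 /\ (forall a b, F a -> F b -> F (a - b)) /\ (forall a b, F a -> F b -> F (a * b)).

Definition contains_laurent (F : Ct -> Prop) : Prop :=
  forall (p : {poly CC}) (k : nat), F (toCt p / tt_ ^+ k).

Definition within_local (K : CC -> Prop) (F : Ct -> Prop) : Prop :=
  forall f, F f -> exists p q : {poly CC},
    f = toCt p / toCt q /\ q.[1] != 0 /\ (forall l, K l -> q.[l] != 0).

Definition congA (n : nat) (F : Ct -> Prop) (rels : seq (seq (Ct * seq 'I_n))) :=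
  @cong Ct n F rels.

Definition relsAt (n : nat) (l : CC) (rels : seq (seq (Ct * seq 'I_n)))
  : seq (seq (CC * seq 'I_n)) :=
  map (map (fun cw => (fev l cw.1, cw.2))) rels.

Definition congAt (n : nat) (l : CC) (rels : seq (seq (Ct * seq 'I_n))) :=
  @cong CC n (fun _ => True) (relsAt l rels).

Definition gam (n : nat) (l : CC) (a : term Ct n) : term CC n := tmap (fev l) a.

(* Equality in A_1 := A / (t-1)A  (gamma_1 is the identity on expressions). *)
Definition cong1 (n : nat) (F : Ct -> Prop) (rels : seq (seq (Ct * seq 'I_n)))
    (a b : term Ct n) : Prop :=
  exists d, wf F d /\ congA F rels (tSub a b) (tMul (tCst (tt_ - 1)) d).

Definition Kt (K : CC -> Prop) := {l : CC | K l}.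

(* I is a (two-sided) ideal of  Ahat = prod_{l in K} A_l ; elements of Ahat
   are families u : Kt K -> term CC n, equal iff equal in each A_l. *)
Definition is_hat_ideal (n : nat) (K : CC -> Prop) (rels : seq (seq (Ct * seq 'I_n)))
    (I : (Kt K -> term CC n) -> Prop) : Prop :=
  (forall u v, (forall k, congAt (sval k) rels (u k) (v k)) -> I u -> I v) /\
  I (fun _ => tCst 0) /\
  (forall u v, I u -> I v -> I (fun k => tAdd (u k) (v k))) /\
  (forall u v, I v -> I (fun k => tMul (u k) (v k))) /\
  (forall u v, I u -> I (fun k => tMul (u k) (v k))).

Definition gamma (n : nat) (K : CC -> Prop) (a : term Ct n) : Kt K -> term CC n :=
  fun k => gam (sval k) a.

(* Gamma(I ∩ gamma(A)) = { gamma_1(b) : b in A, gamma(b) in I } ⊆ A_1 *)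
Definition Gamma_img (n : nat) (K : CC -> Prop) (F : Ct -> Prop)
    (rels : seq (seq (Ct * seq 'I_n))) (I : (Kt K -> term CC n) -> Prop)
    (a : term Ct n) : Prop :=
  wf F a /\ exists b, wf F b /\ I (@gamma n K b) /\ cong1 F rels a b.

(* J is a Poisson ideal of the Poisson algebra A_1, whose bracket is
   {gamma_1 a, gamma_1 b} = gamma_1 d  where  (t-1) d = ab - ba in A. *)
Definition is_poisson_ideal (n : nat) (F : Ct -> Prop) (rels : seq (seq (Ct * seq 'I_n)))
    (J : term Ct n -> Prop) : Prop :=
  (forall a, J a -> wf F a) /\
  (forall a b, wf F b -> J a -> cong1 F rels a b -> J b) /\
  J (tCst 0) /\
  (forall a b, J a -> J b -> J (tAdd a b)) /\
  (forall a b, wf F a -> J b -> J (tMul a b)) /\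
  (forall a b, wf F b -> J a -> J (tMul a b)) /\
  (forall a b d, wf F a -> wf F b -> wf F d -> J a ->
     congA F rels (tSub (tMul a b) (tMul b a)) (tMul (tCst (tt_ - 1)) d) -> J d).

(* Main.v *)
Require Import Defs.
From HB Require Import structures.
From mathcomp Require Import all_boot all_order all_algebra.
From mathcomp Require Import complex Rstruct fraction.
From mathcomp Require Import boolp.
From Stdlib Require Import ClassicalEpsilon ProofIrrelevance.
Set Implicit Arguments. Unset Strict Implicit. Unset Printing Implicit Defensive.
Import Order.TTheory GRing.Theory Num.Theory.
Local Open Scope ring_scope.

Record Q (R : comNzRingType) (n : nat) (P : R -> Prop) (rels : seq (seq (R * seq 'I_n))) :=
  MkQ { qS : term R n -> Prop; qP : exists x, qS = cong P rels x }.

HB.instance Definition _ R n P rels := gen_eqMixin (@Q R n P rels).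
HB.instance Definition _ R n P rels := gen_choiceMixin (@Q R n P rels).

Lemma cong_eqv (R : comNzRingType) n P rels (x y : term R n) :
  cong P rels x y -> cong P rels x = cong P rels y.
Proof.
move=> h; apply: funext => z; apply: propext; split => h2.
  exact: c_trans (c_sym h) h2.
exact: c_trans h h2.
Qed.

Definition proj (R : comNzRingType) n P rels (x : term R n) : Q P rels :=
  @MkQ R n P rels (cong P rels x) (ex_intro _ x erefl).

Lemma projP (R : comNzRingType) n P rels (x y : term R n) :
  proj P rels x = proj P rels y <-> cong P rels x y.
Proof.
split.
  move=> h; have : qS (proj P rels x) = qS (proj P rels y) by rewrite h.
  by move=> /= ->; apply: c_refl.
move=> h; rewrite /proj; move: (ex_intro _ x _) (ex_intro _ y _).
rewrite (cong_eqv h) => p1 p2; by rewrite (proof_irrelevance _ p1 p2).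
Qed.

Definition repr (R : comNzRingType) n P rels (q : @Q R n P rels) : term R n :=
  proj1_sig (constructive_indefinite_description _ (qP q)).

Lemma reprK (R : comNzRingType) n P rels (q : @Q R n P rels) : proj P rels (repr q) = q.
Proof.
rewrite /repr; case: constructive_indefinite_description => x /= hx.
case: q hx => S pS /= hx; rewrite /proj; move: (ex_intro _ _ _) pS.
rewrite -hx => p1 p2; by rewrite (proof_irrelevance _ p1 p2).
Qed.

Lemma proj_surj (R : comNzRingType) n P rels (q : @Q R n P rels) : exists x, q = proj P rels x.
Proof. by exists (repr q); rewrite reprK. Qed.

Lemma repr_proj (R : comNzRingType) n P rels (x : term R n) : cong P rels (repr (proj P rels x)) x.
Proof. by apply/projP; rewrite reprK. Qed.

Definition Qadd (R : comNzRingType) n P rels (p q : @Q R n P rels) := proj P rels (tAdd (repr p) (repr q)).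
Definition Qmul (R : comNzRingType) n P rels (p q : @Q R n P rels) := proj P rels (tMul (repr p) (repr q)).
Definition Qopp (R : comNzRingType) n P rels (p : @Q R n P rels) := proj P rels (tOpp (repr p)).
Definition Qzero (R : comNzRingType) n P rels : @Q R n P rels := proj P rels (tCst 0).
Definition Qone (R : comNzRingType) n P rels : @Q R n P rels := proj P rels (tCst 1).

Lemma QaddE (R : comNzRingType) n P rels (x y : term R n) :
  Qadd (proj P rels x) (proj P rels y) = proj P rels (tAdd x y).
Proof. by apply/projP; apply: c_add; apply: repr_proj. Qed.
Lemma QmulE (R : comNzRingType) n P rels (x y : term R n) :
  Qmul (proj P rels x) (proj P rels y) = proj P rels (tMul x y).
Proof. by apply/projP; apply: c_mul; apply: repr_proj. Qed.
Lemma QoppE (R : comNzRingType) n P rels (x : term R n) :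
  Qopp (proj P rels x) = proj P rels (tOpp x).
Proof. by apply/projP; apply: c_opp; apply: repr_proj. Qed.


Ltac qelim := repeat match goal with
  | q : Q _ _ |- _ => let x := fresh "x" in have [x ->] := proj_surj q; clear q end;
  rewrite /Qzero /Qone ?QoppE ?QaddE ?QmulE ?QoppE ?QaddE ?QmulE ?QaddE ?QmulE; apply/projP.

Lemma QaddA (R : comNzRingType) n P rels : associative (@Qadd R n P rels).
Proof. move=> a b c; qelim; exact: c_addA. Qed.
Lemma QaddC (R : comNzRingType) n P rels : commutative (@Qadd R n P rels).
Proof. move=> a b; qelim; exact: c_addC. Qed.
Lemma Qadd0 (R : comNzRingType) n P rels : left_id (Qzero P rels) (@Qadd R n P rels).
Proof. move=> a; qelim; apply: c_trans; [apply: c_addC | apply: c_add0]. Qed.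
Lemma QaddN (R : comNzRingType) n P rels : left_inverse (Qzero P rels) (@Qopp R n P rels) (@Qadd R n P rels).
Proof. move=> a; qelim;  apply: c_trans; [apply: c_addC | apply: c_addN]. Qed.

HB.instance Definition _ R n P rels := GRing.isZmodule.Build (@Q R n P rels)
  (@QaddA R n P rels) (@QaddC R n P rels) (@Qadd0 R n P rels) (@QaddN R n P rels).

Lemma QmulA (R : comNzRingType) n P rels : associative (@Qmul R n P rels).
Proof. move=> a b c; qelim; exact: c_mulA. Qed.
Lemma Qmul1l (R : comNzRingType) n P rels : left_id (Qone P rels) (@Qmul R n P rels).
Proof. move=> a; qelim; exact: c_mul1l. Qed.
Lemma Qmul1r (R : comNzRingType) n P rels : right_id (Qone P rels) (@Qmul R n P rels).
Proof. move=> a; qelim; exact: c_mul1r. Qed.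
Lemma QmulDl (R : comNzRingType) n P rels : left_distributive (@Qmul R n P rels) (@Qadd R n P rels).
Proof. move=> a b c; have [x ->] := proj_surj a; have [y ->] := proj_surj b; have [z ->] := proj_surj c. rewrite (QaddE _ _ x y) (QmulE _ _ x z) (QmulE _ _ y z) QmulE QaddE; apply/projP; exact: c_mulDl. Qed.
Lemma QmulDr (R : comNzRingType) n P rels : right_distributive (@Qmul R n P rels) (@Qadd R n P rels).
Proof. move=> a b c; have [x ->] := proj_surj a; have [y ->] := proj_surj b; have [z ->] := proj_surj c. rewrite (QaddE _ _ y z) (QmulE _ _ x y) (QmulE _ _ x z) QmulE QaddE; apply/projP; exact: c_mulDr. Qed.

HB.instance Definition _ R n P rels := GRing.Zmodule_isPzRing.Build (@Q R n P rels)
  (@QmulA R n P rels) (@Qmul1l R n P rels) (@Qmul1r R n P rels) (@QmulDl R n P rels) (@QmulDr R n P rels).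


Lemma projD (R : comNzRingType) n P rels (x y : term R n) :
  proj P rels (tAdd x y) = proj P rels x + proj P rels y.
Proof. by rewrite -QaddE. Qed.
Lemma projM (R : comNzRingType) n P rels (x y : term R n) :
  proj P rels (tMul x y) = proj P rels x * proj P rels y.
Proof. by rewrite -QmulE. Qed.
Lemma projN (R : comNzRingType) n P rels (x : term R n) :
  proj P rels (tOpp x) = - proj P rels x.
Proof. by rewrite -QoppE. Qed.
Lemma projB (R : comNzRingType) n P rels (x y : term R n) :
  proj P rels (tSub x y) = proj P rels x - proj P rels y.
Proof. by rewrite /tSub projD projN. Qed.
Lemma proj0 (R : comNzRingType) n P rels : proj P rels (tCst 0 : term R n) = 0.
Proof. by []. Qed.
Lemma proj1 (R : comNzRingType) n P rels : proj P rels (tCst 1 : term R n) = 1.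
Proof. by []. Qed.
Lemma projCD (R : comNzRingType) n P rels (a b : R) : P a -> P b ->
  proj P rels (tCst (a + b) : term R n) = proj P rels (tCst a) + proj P rels (tCst b).
Proof. by move=> ha hb; rewrite -projD; apply/projP; apply: c_cstD. Qed.
Lemma projCM (R : comNzRingType) n P rels (a b : R) : P a -> P b ->
  proj P rels (tCst (a * b) : term R n) = proj P rels (tCst a) * proj P rels (tCst b).
Proof. by move=> ha hb; rewrite -projM; apply/projP; apply: c_cstM. Qed.
Lemma projCC (R : comNzRingType) n P rels (a : R) (q : Q P rels) : P a ->
  proj P rels (tCst a : term R n) * q = q * proj P rels (tCst a).
Proof. move=> ha; have [x ->] := proj_surj q; rewrite -!projM; apply/projP; exact: c_cstC. Qed.
Lemma projRel (R : comNzRingType) n P rels (r : seq (R * seq 'I_n)) : List.In r rels ->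
  proj P rels (lincomb r) = 0.
Proof. by move=> hr; rewrite -proj0; apply/projP; apply: c_rel. Qed.
Lemma projSum (R : comNzRingType) n P rels (I : Type) (s : seq I) (c : I -> R) (e : I -> term R n) :
  proj P rels (tsum s c e) = \sum_(i <- s) proj P rels (tCst (c i)) * proj P rels (e i).
Proof. elim: s => [|i s IH] /=; first by rewrite big_nil. by rewrite big_cons projD projM IH. Qed.


Lemma toCt_neq0 (q : {poly CC}) (l : CC) : q.[l] != 0 -> toCt q != 0.
Proof.
move=> h; rewrite /toCt tofrac_eq0; apply: contraNneq h => ->; by rewrite horner0.
Qed.

Lemma fevE (l : CC) (p q : {poly CC}) : q.[l] != 0 -> fev l (toCt p / toCt q) = p.[l] / q.[l].
Proof.
move=> hq; rewrite /fev.
have ex : exists c : CC, exists p0 q0 : {poly CC},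
   toCt p / toCt q = toCt p0 / toCt q0 /\ q0.[l] != 0 /\ c = p0.[l] / q0.[l].
  by exists (p.[l]/q.[l]), p, q.
case: (epsilon_spec (inhabits 0) _ ex) => p0 [q0 [e [hq0 ->]]].
have h0 : toCt p / toCt q == toCt p0 / toCt q0 by rewrite e.
move: h0; rewrite (@eqr_div {fraction {poly CC}} _ _ _ _ (toCt_neq0 hq) (toCt_neq0 hq0)).
rewrite /toCt -!tofracM tofrac_eq => /eqP h.
have h2 := congr1 (fun r => r.[l]) h; rewrite /= !hornerM in h2.
by apply/eqP; rewrite eqr_div // h2.
Qed.

Definition rep (l : CC) (f : Ct) :=
  exists p q : {poly CC}, f = toCt p / toCt q /\ q.[l] != 0.

Lemma fevD l a b : rep l a -> rep l b -> fev l (a + b) = fev l a + fev l b.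
Proof.
move=> [p [q [-> hq]]] [p' [q' [-> hq']]].
rewrite (addf_div _ _ (toCt_neq0 hq) (toCt_neq0 hq')) /toCt -!tofracM -tofracD.
rewrite !fevE ?hornerM ?mulf_neq0 // hornerD !hornerM addf_div //.
Qed.

Lemma fevM l a b : rep l a -> rep l b -> fev l (a * b) = fev l a * fev l b.
Proof.
move=> [p [q [-> hq]]] [p' [q' [-> hq']]].
rewrite mulf_div /toCt -!tofracM.
rewrite !fevE ?hornerM ?mulf_neq0 // mulf_div //.
Qed.

Lemma fevC l (c : CC) : fev l (toCt c%:P) = c.
Proof.
have -> : toCt c%:P = toCt c%:P / toCt 1 by rewrite /toCt tofrac1 divr1.
by rewrite fevE ?hornerC ?divr1 // oner_neq0.
Qed.

Lemma fev1 l : fev l 1 = 1.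
Proof. by rewrite -(fevC l 1) /toCt tofrac1. Qed.

Lemma fev0 l : fev l 0 = 0.
Proof. by rewrite -(fevC l 0) /toCt tofrac0. Qed.

Lemma fevtt l : fev l (tt_ - 1) = l - 1.
Proof.
have -> : tt_ - 1 = toCt ('X - 1) / toCt 1 by rewrite /tt_ /toCt tofrac1 divr1 tofracB tofrac1.
by rewrite fevE ?hornerE ?divr1 // oner_neq0.
Qed.

Lemma tmap_monom (R S : comNzRingType) n (f : R -> S) (w : seq 'I_n) :
  f 1 = 1 -> tmap f (monom R w) = monom S w.
Proof. move=> f1; elim: w => [|i w IH] /=; by rewrite ?f1 // IH. Qed.

Lemma tmap_lincomb (R S : comNzRingType) n (f : R -> S) (r : seq (R * seq 'I_n)) :
  f 1 = 1 -> f 0 = 0 ->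
  tmap f (lincomb r) = lincomb (map (fun cw => (f cw.1, cw.2)) r).
Proof.
move=> f1 f0; elim: r => [|[c w] r IH] /=; first by rewrite f0.
by rewrite IH tmap_monom.
Qed.

Lemma cong_map (R S : comNzRingType) n (P : R -> Prop) (P' : S -> Prop)
  (rels : seq (seq (R * seq 'I_n))) (f : R -> S) :
  (forall a b, P a -> P b -> f (a + b) = f a + f b) ->
  (forall a b, P a -> P b -> f (a * b) = f a * f b) ->
  (forall a, P a -> P' (f a)) -> f 1 = 1 -> f 0 = 0 ->
  forall x y, cong P rels x y ->
    cong P' (map (map (fun cw => (f cw.1, cw.2))) rels) (tmap f x) (tmap f y).
Proof.
move=> fD fM fP f1 f0 x y; elim => /=.
- by move=> *; apply: c_refl.
- by move=> *; apply: c_sym.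
- by move=> *; apply: c_trans; eauto.
- by move=> *; apply: c_add.
- by move=> *; apply: c_mul.
- by move=> *; apply: c_opp.
- by move=> *; apply: c_addA.
- by move=> *; apply: c_addC.
- by move=> *; rewrite f0; apply: c_add0.
- by move=> *; rewrite f0; apply: c_addN.
- by move=> *; apply: c_mulA.
- by move=> *; rewrite f1; apply: c_mul1l.
- by move=> *; rewrite f1; apply: c_mul1r.
- by move=> *; apply: c_mulDl.
- by move=> *; apply: c_mulDr.
- by move=> a b Pa Pb; rewrite fD //; apply: c_cstD; apply: fP.
- by move=> a b Pa Pb; rewrite fM //; apply: c_cstM; apply: fP.
- by move=> a z Pa; apply: c_cstC; apply: fP.
- move=> r hr; rewrite tmap_lincomb // f0; apply: c_rel.
  by apply: List.in_map.
Qed.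

Lemma tmap_tsum (R S : comNzRingType) n (I : Type) (f : R -> S) (s : seq I) c (e : I -> term R n) :
  f 0 = 0 -> tmap f (tsum s c e) = tsum s (fun i => f (c i)) (fun i => tmap f (e i)).
Proof. by move=> f0; elim: s => [|i s IH] /=; rewrite ?f0 // IH. Qed.

Lemma swapB (T : zmodType) (x y z w : T) : (x - y) - (z - w) = (x - z) - (y - w).
Proof. rewrite !opprB !addrA -!addrA; congr (_ + _).
by rewrite [w - z]addrC [w - y]addrC !addrA [-y - z]addrC. Qed.
Lemma key (T : pzRingType) (a b0 c d e f s mu : T) :
  c * s = s * c -> mu * s = 1 ->
  a - b0 = s * e -> e * c - c * e = s * f -> a * c - c * a = s * d ->
  mu * (b0 * c + (-1) * (c * b0)) = d - s * f.
Proof.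
move=> cs mus h1 h2 h3.
have hb : b0 = a - s * e by rewrite -h1 opprB addrC subrK.
have E : b0 * c + (-1) * (c * b0) = s * (d - s * f).
  rewrite mulN1r hb mulrBl mulrBr -mulrA (mulrA c s e) cs -mulrA swapB.
  by rewrite h3 -mulrBr h2 mulrBr.
by rewrite E mulrA mus mul1r.
Qed.

Lemma seqK (K : CC -> Prop) : (forall s : seq CC, exists l, K l /\ l \notin s) ->
  forall m, exists rs : seq CC, [/\ uniq rs, size rs = m & forall x, x \in rs -> K x].
Proof.
move=> H; elim => [|m [rs [u sz hK]]]; first by exists [::].
have [l [hl nl]] := H rs; exists (l :: rs); split => /=; [by rewrite nl u | by rewrite sz |].
by move=> x; rewrite inE => /orP [/eqP -> //|]; exact: hK.
Qed.

Theorem theorem1p4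
  (K : CC -> Prop) (F : Ct -> Prop) (n : nat)
  (rels : seq (seq (Ct * seq 'I_n)))
  (I : eqType) (xi : I -> term Ct n) :
  (* K is an infinite subset of CC \ {0,1} *)
  (forall l, K l -> l != 0 /\ l != 1) ->
  (forall s : seq CC, exists l, K l /\ l \notin s) ->
  (* CC[t,t^-1] ⊆ F ⊆ {f/g : g(1) != 0, g(l) != 0 (l in K)}, F a subring *)
  subring_of_Ct F -> contains_laurent F -> within_local K F ->
  (* relations are F-linear combinations of monomials *)
  (forall r, List.In r rels -> forall cw, List.In cw r -> F cw.1) ->
  (* t-1 is nonzero, a nonunit and a non-zero-divisor in A *)
  ~ congA F rels (tCst (tt_ - 1)) (tCst 0) ->
  ~ (exists u, wf F u /\ congA F rels (tMul (tCst (tt_ - 1)) u) (tCst 1)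
                     /\ congA F rels (tMul u (tCst (tt_ - 1))) (tCst 1)) ->
  (forall a, wf F a -> congA F rels (tMul (tCst (tt_ - 1)) a) (tCst 0) ->
     congA F rels a (tCst 0)) ->
  (forall a, wf F a -> congA F rels (tMul a (tCst (tt_ - 1))) (tCst 0) ->
     congA F rels a (tCst 0)) ->
  (* A_1 = A/(t-1)A is commutative *)
  (forall a b, wf F a -> wf F b -> cong1 F rels (tMul a b) (tMul b a)) ->
  (* {xi_i} is an F-basis of A whose images are CC-bases of A_1 and of A_l *)
  (forall i, wf F (xi i)) ->
  is_basis F (wf F) (congA F rels) xi ->
  is_basis (fun c => exists z : CC, c = toCt z%:P) (wf F) (cong1 F rels) xi ->
  (forall l, K l ->
     is_basis (fun _ => True) (fun _ => True) (congAt l rels) (fun i => gam l (xi i))) ->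
  (* conclusion: gamma is injective, and Gamma(I ∩ gamma(A)) is a Poisson ideal *)
  (forall a b, wf F a -> wf F b ->
     (forall l, K l -> congAt l rels (gam l a) (gam l b)) -> congA F rels a b) /\
  (forall Id : (Kt K -> term CC n) -> Prop, is_hat_ideal rels Id ->
     is_poisson_ideal F rels (Gamma_img F rels Id)).
Proof.
move=> hK0 hKinf hsub hlaur hloc hrels hnz hnu hzd1 hzd2 hcomm hxiwf hbA hb1 hbl.
case: hsub => F1 [FB FM].
have F0 : F 0 by rewrite -(subrr 1); apply: FB.
have FN : forall a, F a -> F (- a) by move=> a ha; rewrite -sub0r; apply: FB.
have FD : forall a b, F a -> F b -> F (a + b).
  by move=> a b ha hb; rewrite -(opprK b); apply: FB => //; apply: FN.
have Ftt : F (tt_ - 1).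
  apply: FB => //; have := hlaur 'X 0%N; by rewrite expr0 divr1.
have rep_of : forall l a, K l -> F a -> rep l a.
  move=> l a hl ha; case: (hloc a ha) => p [q [e [_ hq]]]; exists p, q; split => //; exact: hq.
have Gmap : forall l x y, K l -> congA F rels x y -> congAt l rels (gam l x) (gam l y).
  move=> l x y hl h; rewrite /congAt /relsAt /gam.
  apply: (cong_map (P := F)) => //.
  - by move=> a b ha hb; apply: fevD; apply: rep_of.
  - by move=> a b ha hb; apply: fevM; apply: rep_of.
  - exact: fev1.
  - exact: fev0.
split.
  move=> a b wa wb hab.
  have wd : wf F (tSub a b) by split.
  case: hbA => [hspan _]; have [s [c [us [Fc hd]]]] := hspan _ wd.
  have hc0 : forall i, i \in s -> c i = 0.
    move=> i hi.
    have z : forall l, K l -> fev l (c i) = 0.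
      move=> l hl; have [_ hind] := hbl l hl.
      apply: (hind s (fun i => fev l (c i))) => //.
      have := Gmap l _ _ hl hd; rewrite /gam tmap_tsum ?fev0 // => h.
      apply: c_trans (c_sym h) _.
      apply/projP; rewrite /= projD projN proj0.
      have := hab l hl; move/projP => ->; exact: subrr.
    case: (hloc _ (Fc i)) => p [q [e [_ hq]]].
    have pz : forall l, K l -> p.[l] = 0.
      move=> l hl; have := z l hl; rewrite e fevE ?hq //.
      by move/eqP; rewrite mulf_eq0 invr_eq0 (negbTE (hq l hl)) orbF => /eqP.
    rewrite e; have -> : p = 0.
      apply/eqP; apply/negPn/negP => pn0.
      have [rs [urs szr allK]] := seqK hKinf (size p).
      have hr : all (root p) rs by apply/allP => x /allK hx; apply/rootP; exact: pz.
      by have := max_poly_roots pn0 hr urs; rewrite szr ltnn.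
    by rewrite /toCt tofrac0 mul0r.
  move/projP: hd; rewrite projSum big1_seq => [|i /andP[_ hi]]; last by rewrite hc0 // proj0 mul0r.
  rewrite /= projD projN => /eqP; rewrite subr_eq0 => /eqP h.
  exact/projP.
move=> Id [Icong [I0 [Iadd [IL IR]]]].
pose tau := proj F rels (tCst (tt_ - 1)).
have tauC : forall q, tau * q = q * tau by move=> q; apply: projCC.
have c1E : forall a b d, congA F rels (tSub a b) (tMul (tCst (tt_ - 1)) d) ->
    proj F rels a - proj F rels b = tau * proj F rels d.
  by move=> a b d /projP; rewrite projB projM.
have c1I : forall a b d, proj F rels a - proj F rels b = tau * proj F rels d ->
    congA F rels (tSub a b) (tMul (tCst (tt_ - 1)) d).
  by move=> a b d h; apply/projP; rewrite projB projM.
split; first by move=> a [].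
split.
  move=> a b wb [wa [b0 [wb0 [Ib0 [d [wd hd]]]]]] [d' [wd' hd']].
  split => //; exists b0; split => //; split => //.
  exists (tSub d d'); split; first by split.
  apply: c1I; rewrite projB mulrBr -(c1E _ _ _ hd) -(c1E _ _ _ hd').
  by rewrite swapB subrr sub0r opprB.
split.
  split => //; exists (tCst 0); split => //; split.
    apply: (Icong (fun _ => tCst 0)) I0 => k; rewrite /gamma /gam /= fev0; exact: c_refl.
  exists (tCst 0); split => //; apply: c1I; by rewrite proj0 subrr mulr0.
split.
  move=> a a' [wa [b [wb [Ib [d [wd hd]]]]]] [wa' [b' [wb' [Ib' [d' [wd' hd']]]]]].
  split; first by split.
  exists (tAdd b b'); split; first by split.
  split; first exact: (Iadd _ _ Ib Ib').
  exists (tAdd d d'); split; first by split.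
  apply: c1I; rewrite !projD mulrDr -(c1E _ _ _ hd) -(c1E _ _ _ hd').
  by rewrite opprD addrACA.
split.
  move=> a b wa [wb [b0 [wb0 [Ib0 [d [wd hd]]]]]].
  split; first by split.
  exists (tMul a b0); split; first by split.
  split; first exact (IL (@gamma n K a) (@gamma n K b0) Ib0).
  exists (tMul a d); split; first by split.
  apply: c1I; rewrite !projM -mulrBr (c1E _ _ _ hd); by rewrite !mulrA tauC.
split.
  move=> a b wb [wa [b0 [wb0 [Ib0 [d [wd hd]]]]]].
  split; first by split.
  exists (tMul b0 b); split; first by split.
  split; first exact (IR (@gamma n K b0) (@gamma n K b) Ib0).
  exists (tMul d b); split; first by split.
  by apply: c1I; rewrite !projM -mulrBl (c1E _ _ _ hd) mulrA.
move=> a c d wa wc wd [_ [b0 [wb0 [Ib0 [e [we he]]]]]] hacd.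
have [f [wf' hf]] := hcomm e c we wc.
split => //.
exists (tSub d (tMul (tCst (tt_ - 1)) f)); split; first by split => //; split.
split; last first.
  exists f; split => //; apply: c1I; rewrite projB projM.
  by rewrite opprB addrC subrK.
apply: (Icong (fun k => tMul (tCst (sval k - 1)^-1)
   (tAdd (tMul (gam (sval k) b0) (gam (sval k) c))
         (tMul (tCst (-1)) (tMul (gam (sval k) c) (gam (sval k) b0)))))); last first.
  exact: (IL (fun k => tCst (sval k - 1)^-1) _ (Iadd _ _ (IR _ (@gamma n K c) Ib0)
            (IL (fun _ => tCst (-1)) _ (IL (@gamma n K c) _ Ib0)))).
move=> [l hl] /=.
pose pL := @proj _ n (fun _ => True) (relsAt l rels).
have G1 := Gmap l _ _ hl he; move/projP: G1; rewrite /gam /= projD projN !projM fevtt => G1.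
have G2 := Gmap l _ _ hl hf; move/projP: G2; rewrite /gam /= projD projN !projM fevtt => G2.
have G3 := Gmap l _ _ hl hacd; move/projP: G3; rewrite /gam /= projD projN !projM fevtt => G3.
apply/projP; rewrite /gam /= projD projN !projM projD !projM fevtt.
have m1 : pL (tCst (-1)) = -1.
  have : pL (tCst (-1)) + pL (tCst 1) = 0 by rewrite /pL -projCD // addNr.
  by move/eqP; rewrite addr_eq0 => /eqP ->.
rewrite /pL in m1; rewrite m1; apply: key G1 G2 G3; first by rewrite projCC.
have l1 : l - 1 != 0 by rewrite subr_eq0; case: (hK0 l hl).
by rewrite -projCM // mulVf.
Qed.
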